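(* There exists an Opt-Lyapunov function for $(X^{\rm in},T)$ if and only if there exist a function $W:\mathbb R^d\to[0,+\infty]$ and a function $\rho:[0,+\infty]\to[0,+\infty]$ such that: (i) $\sup_{x\in X^{\rm in}}W(x)$ is finite and strictly positive; (ii) $W(T(x))\le\rho(W(x))$ for all $x\in\mathbb R^d$; (iii) $\rho(x)=0\iff x=0$ and $\rho(x)=+\infty\iff x=+\infty$; (iv) the restriction of $\rho$ to $\mathbb R_+$ belongs to $\mathcal K$; (v) $\rho(x)<x$ for all $x\in(0,+\infty)$.
   Context: $X^{\rm in}\subseteq\mathbb R^d$, $T:\mathbb R^d\to\mathbb R^d$. $\mathcal K$: continuous strictly increasing $\alpha:\mathbb R_+\to\mathbb R_+$ with $\alpha(0)=0$. An Opt-Lyapunov function for $(X^{\rm in},T)$ is a function $V:\mathbb R^d\to[0,+\infty]$ such that $\sup_{x\in X^{\rm in}}V(x)\in(0,1]$ and there exists $\lambda\in(0,1)$ with $V(T(x))\le\lambda V(x)$ for all $x\in\mathbb R^d$ (convention $\lambda\cdot(+\infty)=+\infty$). *)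

(* Defs.v *)
From HB Require Import structures.
From mathcomp Require Import all_boot all_order all_algebra.
From mathcomp Require Import all_classical all_reals all_analysis.
Set Implicit Arguments. Unset Strict Implicit. Unset Printing Implicit Defensive.
Import Order.TTheory GRing.Theory Num.Theory.
Import numFieldNormedType.Exports.
Local Open Scope classical_set_scope.
Local Open Scope ring_scope.

(* R^d is rendered as row vectors 'rV[R]_d; [0,+oo] as nonnegative elements of \bar R. *)

Definition classK (R : realType) (alpha : R -> R) : Prop :=
  [/\ (forall x : R, 0 <= x -> 0 <= alpha x),
      {in [set x : R | 0 <= x] &, {homo alpha : x y / x < y}},
      {within [set x : R | 0 <= x], continuous alpha} &
      alpha 0 = 0].

Local Open Scope ereal_scope.

Definition OptLyapunov (R : realType) (d : nat) (Xin : set 'rV[R]_d)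
    (T : 'rV[R]_d -> 'rV[R]_d) (V : 'rV[R]_d -> \bar R) : Prop :=
  [/\ (forall x, 0 <= V x),
      0 < ereal_sup (V @` Xin) /\ ereal_sup (V @` Xin) <= 1 &
      exists lambda : R, (0 < lambda < 1)%R /\
        forall x, V (T x) <= lambda%:E * V x].

(* Main.v *)
Require Import Defs.
From HB Require Import structures.
From mathcomp Require Import all_boot all_order all_algebra.
From mathcomp Require Import all_classical all_reals all_analysis.
Import Order.TTheory GRing.Theory Num.Theory.
Import numFieldNormedType.Exports.
Local Open Scope classical_set_scope.
Local Open Scope ring_scope.
Local Open Scope ereal_scope.

Theorem mainTheorem15 (R : realType) (d : nat) (Xin : set 'rV[R]_d)
    (T : 'rV[R]_d -> 'rV[R]_d) :
  (exists V : 'rV[R]_d -> \bar R, OptLyapunov Xin T V) <->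
  (exists (W : 'rV[R]_d -> \bar R) (rho : \bar R -> \bar R),
     ((forall x, 0 <= W x) /\ (forall t, 0 <= t -> 0 <= rho t)) /\
     [/\ (* (i) *) (0 < ereal_sup (W @` Xin) < +oo),
         (* (ii) *) (forall x, W (T x) <= rho (W x)),
         (* (iii) *) (forall t, 0 <= t -> (rho t = 0 <-> t = 0) /\ (rho t = +oo <-> t = +oo)),
         (* (iv) *) (exists f : R -> R, classK f /\
                       forall r : R, (0 <= r)%R -> rho r%:E = (f r)%:E) &
         (* (v) *) (forall r : R, (0 < r)%R -> rho r%:E < r%:E)]).
Proof.
split.
- move=> [V [V0 [s0 s1] [l [/andP[l0 l1] VT]]]].
  exists V, (fun t => l%:E * t); split.
    split=> // t t0; apply: mule_ge0 => //; by rewrite lee_fin ltW.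
  split.
  + by apply/andP; split => //; apply: le_lt_trans s1 _; rewrite ltey.
  + exact: VT.
  + move=> t; case: t => [r| |] //= r0; split; split => //.
    * move=> /eqP; rewrite -EFinM eqe mulf_eq0 => /orP[|/eqP -> //].
      by rewrite gt_eqF.
    * by move=> [->]; rewrite mule0.
    * by rewrite gt0_muley ?lte_fin.
    * by move=> _; rewrite gt0_muley ?lte_fin.
  + exists (fun r => l * r)%R; split => //.
    split.
    * by move=> x x0; rewrite mulr_ge0 // ltW.
    * by move=> x y _ _ xy; rewrite ltr_pM2l.
    * by apply: continuous_subspaceT; exact: mulrl_continuous.
    * by rewrite mulr0.
  + move=> r r0; rewrite -EFinM lte_fin -{2}(mul1r r) ltr_pM2r //.
- move=> [W [rho [[W0 rho0] [/andP[s0 sfin] WT _ [f [[f0 fhom _ f00] rhof]] rhov]]]].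
  set M := ereal_sup (W @` Xin) in s0 sfin.
  have [m hM] : exists m : R, M = m%:E.
    by move: s0 sfin; case: M => [r| |] // _ _; exists r.
  have m0 : (0 < m)%R by rewrite -lte_fin -hM.
  have fle : forall r : R, (0 <= r)%R -> (f r <= r)%R.
    move=> r; rewrite le_eqVlt => /orP[/eqP <-|r0]; first by rewrite f00.
    by apply: ltW; rewrite -lte_fin -rhof ?ltW // rhov.
  have fmono : forall r s : R, (0 <= r)%R -> (r <= s)%R -> (f r <= f s)%R.
    move=> r s r0; rewrite le_eqVlt => /orP[/eqP -> //|rs].
    by apply: ltW; apply: fhom => //; rewrite inE /= //; apply: le_trans (ltW rs).
  pose a n := iter n f m.
  have a0 : forall n, (0 <= a n)%R.
    by elim=> [|n IH] /=; [exact: ltW | exact: f0].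
  have aS : forall n, a n.+1 = f (a n) by [].
  have adec : forall k n, (a (n + k)%N <= a n)%R.
    elim=> [|k IH] n; first by rewrite addn0.
    by rewrite addnS aS; apply: le_trans (IH n); apply: fle.
  have fm : (f m < m)%R by rewrite -lte_fin -rhof ?ltW // rhov.
  pose lam : R := (2^-1)%R.
  have lam0 : (0 < lam)%R by rewrite invr_gt0.
  have lam1 : (lam < 1)%R by rewrite invf_lt1 // ltr1n.
  pose alpha (t : \bar R) := if t <= m%:E then
     ereal_inf [set (lam ^+ n)%:E | n in [set n | t <= (a n)%:E]] else +oo.
  have WM : forall x, Xin x -> W x <= m%:E.
    by move=> x Xx; rewrite -hM; apply: ereal_sup_ubound; exists x.
  exists (fun x => alpha (W x)); split.
  + move=> x; rewrite /alpha; case: ifP => _; last exact: leey.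
    apply: le_ereal_inf_tmp => y [n _ <-]; rewrite lee_fin; exact: exprn_ge0 (ltW lam0).
  + have le1 : forall x, Xin x -> alpha (W x) <= 1.
      move=> x Xx; rewrite /alpha WM //; apply: ge_ereal_inf.
      by exists (lam ^+ 0)%:E; [exists 0%N => //; exact: WM | rewrite expr0].
    split.
    * have : (f m)%:E < M by rewrite hM lte_fin.
      move=> /ereal_sup_gt [_ [x Xx <-]] fWx.
      apply: (@lt_le_trans _ _ 1); first by rewrite lte01.
      apply: le_trans (ereal_sup_ubound _); last by exists x.
      rewrite /alpha WM //; apply: le_ereal_inf_tmp => y [[|k] hk <-].
        by rewrite expr0.
      exfalso; move: hk; rewrite /=; apply/negP; rewrite -ltNge.
      apply: le_lt_trans fWx; rewrite lee_fin.
      by apply: fmono => //; have := adec k 0%N; rewrite add0n.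
    * by apply: ge_ereal_sup => y [x Xx <-]; apply: le1.
  + exists lam; split; first by rewrite lam0 lam1.
    move=> x; rewrite {2}/alpha; case: ifPn => Wxm; last by rewrite gt0_muley ?lte_fin // leey.
    have [r Wr] : exists r : R, W x = r%:E.
      by move: (W0 x) Wxm; case: (W x) => [r| |] // _ _; exists r.
    have r0 : (0 <= r)%R by rewrite -lee_fin -Wr.
    have key : forall n, W x <= (a n)%:E -> W (T x) <= (a n.+1)%:E.
      move=> n; rewrite Wr lee_fin => rn; apply: le_trans (WT x) _.
      by rewrite Wr rhof // lee_fin aS fmono.
    have WTm : W (T x) <= m%:E.
      apply: le_trans (key 0%N _) _; first by rewrite Wr -Wr.
      by rewrite lee_fin /= ltW.
    rewrite /alpha WTm.
    set A := ereal_inf _; set B := ereal_inf _.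
    have H : (lam^-1)%:E * A <= B.
      apply: le_ereal_inf_tmp => y [n hn <-].
      have : A <= (lam ^+ n.+1)%:E.
        by apply: ereal_inf_lbound; exists n.+1 => //; apply: key.
      rewrite -(@lee_pmul2l _ (lam^-1)%:E) // ?lte_fin ?invr_gt0 //.
      by rewrite -EFinM exprS mulrA mulVf ?mul1r // gt_eqF.
    have : lam%:E * ((lam^-1)%:E * A) <= lam%:E * B by rewrite lee_pmul2l // lte_fin.
    by rewrite muleA -EFinM mulfV ?mul1e // gt_eqF.
Qed.
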